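(* Let $T$ be an Aronszajn tree. Then $\diamondsuit$ implies $\lnot\sigma\mathsf{U}_T$; that is, there is a ladder system coloring which is not $\sigma$-$T$-uniformizable.
   Context: A ladder system is $\vec l=\langle l_\alpha:\alpha\in\omega_1\cap\mathrm{Lim}\rangle$ with each $l_\alpha\subseteq\alpha$ cofinal in $\alpha$ of order type $\omega$; $l_{\alpha,n}$ is its $n$-th element. A ladder system coloring is $\langle\vec l,\vec c\rangle$ with $\vec c=\langle c_\alpha:l_\alpha\to\omega\rangle$. For a tree $T$ of height $\omega_1$, $T_\alpha$ is its $\alpha$-th level, $T\restriction\mathrm{Lim}=\bigcup_{\alpha\in\mathrm{Lim}}T_\alpha$, and $t\restriction\gamma$ is the predecessor of $t$ on level $\gamma$. $\langle\vec l,\vec c\rangle$ is $\sigma$-$T$-uniformizable if there are a decomposition $T\restriction\mathrm{Lim}=\bigcup_{n<\omega}A_n$ and $f:T\restriction\mathrm{Lim}\to\omega$ such that for each $n$ the set $\{\langle t\restriction l_{\alpha,k},c_\alpha(l_{\alpha,k})\rangle:\alpha\in\mathrm{Lim},\ t\in A_n\cap T_\alpha,\ k\ge f(t)\}$ is a function. *)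

(* Defs.v *)
(* omega_1 is modelled abstractly as a type W with a strict
   relation lt characterising it up to isomorphism: a well-order whose proper
   initial segments are all countable while W itself is uncountable. *)
From Stdlib Require Import Arith.

Section Omega1.
Variables (W : Type) (lt : W -> W -> Prop).

Definition countable_set {X : Type} (S : X -> Prop) : Prop :=
  (forall x, ~ S x) \/ exists f : nat -> X, forall x, S x -> exists n, f n = x.

Definition is_omega1 : Prop :=
  (forall a, ~ lt a a) /\
  (forall a b c, lt a b -> lt b c -> lt a c) /\
  (forall a b, lt a b \/ a = b \/ lt b a) /\
  well_founded lt /\
  (forall a, countable_set (fun b => lt b a)) /\
  ~ countable_set (fun _ : W => True).

Definition is_limit (a : W) : Prop :=
  (exists b, lt b a) /\ forall b, lt b a -> exists c, lt b c /\ lt c a.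

Definition unbounded (C : W -> Prop) : Prop :=
  forall b, exists c, lt b c /\ C c.

Definition closed (C : W -> Prop) : Prop :=
  forall a, is_limit a ->
    (forall b, lt b a -> exists c, lt b c /\ lt c a /\ C c) -> C a.

Definition club (C : W -> Prop) : Prop := unbounded C /\ closed C.

Definition stationary (S : W -> Prop) : Prop :=
  forall C, club C -> exists a, C a /\ S a.

Definition diamond : Prop :=
  exists A : W -> W -> Prop,
    (forall a b, A a b -> lt b a) /\
    forall X : W -> Prop,
      stationary (fun a => forall b, lt b a -> (X b <-> A a b)).

(* A ladder system: l a n is the n-th element of l_a, for limit a; l_a is
   then the range of the strictly increasing, cofinal sequence l a. *)
Definition ladder_system (l : W -> nat -> W) : Prop :=
  forall a, is_limit a ->
    (forall n, lt (l a n) a) /\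
    (forall n m, n < m -> lt (l a n) (l a m)) /\
    (forall b, lt b a -> exists n, lt b (l a n)).

(* Trees of height omega_1: nodes N, strict order tlt, height ht.  The
   predecessors of t are mapped by ht isomorphically onto ht t. *)
Definition tree_of_height_omega1 (N : Type) (tlt : N -> N -> Prop)
    (ht : N -> W) : Prop :=
  (forall t, ~ tlt t t) /\
  (forall s t u, tlt s t -> tlt t u -> tlt s u) /\
  (forall s t, tlt s t -> lt (ht s) (ht t)) /\
  (forall t g, lt g (ht t) -> exists s, tlt s t /\ ht s = g) /\
  (forall s s' t, tlt s t -> tlt s' t -> ht s = ht s' -> s = s') /\
  (forall a, exists t, ht t = a).

Definition aronszajn_tree (N : Type) (tlt : N -> N -> Prop)
    (ht : N -> W) : Prop :=
  tree_of_height_omega1 N tlt ht /\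
  (forall a, countable_set (fun t => ht t = a)) /\
  ~ (exists b : W -> N,
       (forall a, ht (b a) = a) /\ (forall a a', lt a a' -> tlt (b a) (b a'))).

(* restr t g s  <->  s = t|g, the predecessor (or t itself) of t on level g *)
Definition restr (N : Type) (tlt : N -> N -> Prop) (ht : N -> W)
    (t : N) (g : W) (s : N) : Prop :=
  (s = t /\ ht t = g) \/ (tlt s t /\ ht s = g).

(* c a k is the colour c_a(l_{a,k}).  sigma-T-uniformizability: *)
Definition sigma_T_uniformizable (N : Type) (tlt : N -> N -> Prop)
    (ht : N -> W) (l : W -> nat -> W) (c : W -> nat -> nat) : Prop :=
  exists (A : nat -> N -> Prop) (f : N -> nat),
    (forall t, is_limit (ht t) -> exists n, A n t) /\
    (forall n t, A n t -> is_limit (ht t)) /\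
    forall n t t' k k' s,
      A n t -> A n t' -> f t <= k -> f t' <= k' ->
      restr N tlt ht t (l (ht t) k) s ->
      restr N tlt ht t' (l (ht t') k') s ->
      c (ht t) k = c (ht t') k'.

End Omega1.

(* Main.v *)
Require Import Defs.
From Stdlib Require Import Arith.
From Stdlib Require Import Classical ClassicalEpsilon Lia.
From Stdlib.Arith Require Cantor.

Lemma choice_fun {A B : Type} (P : A -> B -> Prop) :
  (forall a, exists b, P a b) -> exists f : A -> B, forall a, P a (f a).
Proof.
  intros H. exists (fun a => proj1_sig (constructive_indefinite_description _ (H a))).
  intros a. exact (proj2_sig (constructive_indefinite_description _ (H a))).
Qed.

Fixpoint iter_s {W : Type} (s : W -> W) (x : W) (k : nat) : W :=
  match k with 0 => x | S k => s (iter_s s x k) end.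

Definition limzero {W : Type} (lt : W -> W -> Prop) (x : W) :=
  is_limit W lt x \/ (forall b, ~ lt b x).

Lemma min_elem {W : Type} (lt : W -> W -> Prop) (P : W -> Prop) :
  well_founded lt -> (exists x, P x) -> exists x, P x /\ forall y, P y -> ~ lt y x.
Proof.
  intros Hwf [x Px]. apply NNPP. intros Hn.
  assert (forall y, ~ P y) as Hall.
  { intros y. induction y as [y IH] using (well_founded_ind Hwf).
    intros Py. apply Hn. exists y. split; [exact Py|]. intros z Pz lzy. exact (IH z lzy Pz). }
  exact (Hall x Px).
Qed.

Lemma le_enum {W : Type} (lt : W -> W -> Prop) : is_omega1 W lt ->
  forall b, exists h : nat -> W, forall y, (y = b \/ lt y b) -> exists i, h i = y.
Proof.
  intros (Hirr & Htr & Htot & Hwf & Hcnt & Hunc) b.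
  destruct (Hcnt b) as [Hemp | [f Hf]].
  - exists (fun _ => b). intros y [h|h]. exists 0. congruence. exfalso; exact (Hemp y h).
  - exists (fun n => match n with 0 => b | S n => f n end). intros y [h|h].
    + exists 0. congruence.
    + destruct (Hf y h) as [n Hn']. exists (S n). exact Hn'.
Qed.

Lemma exists_above {W : Type} (lt : W -> W -> Prop) : is_omega1 W lt -> forall x, exists y, lt x y.
Proof.
  intros H x. pose proof H as (Hirr & Htr & Htot & Hwf & Hcnt & Hunc).
  apply NNPP; intros Hn. apply Hunc.
  destruct (le_enum lt H x) as [h Hh].
  right. exists h. intros y _. apply Hh.
  destruct (Htot y x) as [e|[e|e]]; auto. exfalso; apply Hn; eauto.
Qed.

Lemma succ_exists {W : Type} (lt : W -> W -> Prop) : is_omega1 W lt ->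
  exists s : W -> W, forall x, lt x (s x) /\ forall z, lt x z -> ~ lt z (s x).
Proof.
  intros H. apply (choice_fun (fun x y => lt x y /\ forall z, lt x z -> ~ lt z y)). intros x.
  pose proof H as (_ & _ & _ & Hwf & _).
  destruct (min_elem lt (fun y => lt x y) Hwf (exists_above lt H x)) as [y [Hy Hm]].
  exists y. split; auto.
Qed.

Definition succ_spec {W : Type} (lt : W -> W -> Prop) (s : W -> W) :=
  forall x, lt x (s x) /\ forall z, lt x z -> ~ lt z (s x).

Lemma succ_not_limzero {W : Type} (lt : W -> W -> Prop) (H : is_omega1 W lt) (s : W -> W) (Hs : succ_spec lt s) x : ~ limzero lt (s x).
Proof.
  destruct (Hs x) as [h1 h2]. intros [[_ L] | Z].
  - destruct (L x h1) as [c [c1 c2]]. exact (h2 c c1 c2).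
  - exact (Z x h1).
Qed.

Lemma succ_inj {W : Type} (lt : W -> W -> Prop) (H : is_omega1 W lt) (s : W -> W) (Hs : succ_spec lt s) x y : s x = s y -> x = y.
Proof.
  pose proof H as (Hirr & Htr & Htot & Hwf & Hcnt & Hunc).
  intros E. destruct (Htot x y) as [h|[h|h]]; auto; exfalso.
  - destruct (Hs x) as [_ h2]. destruct (Hs y) as [h1 _]. apply (h2 y h). rewrite E. exact h1.
  - destruct (Hs y) as [_ h2]. destruct (Hs x) as [h1 _]. apply (h2 x h). rewrite <- E. exact h1.
Qed.

Lemma iter_lt_limit {W : Type} (lt : W -> W -> Prop) (H : is_omega1 W lt) (s : W -> W) (Hs : succ_spec lt s) a x p : is_limit W lt a -> lt x a -> lt (iter_s s x p) a.
Proof.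
  pose proof H as (Hirr & Htr & Htot & Hwf & Hcnt & Hunc).
  intros [_ L] Hx. induction p as [|p IH]; simpl; auto.
  destruct (L _ IH) as [c [c1 c2]]. destruct (Hs (iter_s s x p)) as [_ h2].
  destruct (Htot (s (iter_s s x p)) c) as [h|[h|h]].
  - eauto.
  - rewrite h; auto.
  - exfalso. exact (h2 c c1 h).
Qed.

Lemma iter_ge {W : Type} (lt : W -> W -> Prop) (H : is_omega1 W lt) (s : W -> W) (Hs : succ_spec lt s) x p : iter_s s x p = x \/ lt x (iter_s s x p).
Proof.
  pose proof H as (Hirr & Htr & Htot & Hwf & Hcnt & Hunc).
  induction p as [|p IH]; simpl; auto. right.
  destruct (Hs (iter_s s x p)) as [h1 _]. destruct IH as [e|e].
  - exact (eq_ind _ (fun z => lt z (s (iter_s s x p))) h1 _ e).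
  - eauto.
Qed.

Lemma decomp {W : Type} (lt : W -> W -> Prop) (H : is_omega1 W lt) (s : W -> W) (Hs : succ_spec lt s) : forall b, exists p : W * nat, limzero lt (fst p) /\ b = iter_s s (fst p) (snd p).
Proof.
  pose proof H as (Hirr & Htr & Htot & Hwf & Hcnt & Hunc).
  intros b. induction b as [b IH] using (well_founded_ind Hwf).
  destruct (classic (limzero lt b)) as [Lb|NL].
  - exists (b,0). simpl; auto.
  - unfold limzero in NL. apply not_or_and in NL as [NLim NZ].
    apply not_all_ex_not in NZ as [b0 Hb0]. apply NNPP in Hb0.
    unfold is_limit in NLim. apply not_and_or in NLim as [N1|N2]; [exfalso; apply N1; eauto|].
    apply not_all_ex_not in N2 as [c Hc]. apply imply_to_and in Hc as [Hcb Hc].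
    assert (Eb : b = s c).
    { destruct (Hs c) as [h1 h2]. destruct (Htot (s c) b) as [h|[h|h]].
      - exfalso. apply Hc. exists (s c). auto.
      - auto.
      - exfalso. exact (h2 b Hcb h). }
    destruct (IH c Hcb) as [[l0 k] [Hl Hc']]. exists (l0, S k). simpl in *.
    split; [exact Hl|]. rewrite Eb, Hc'. reflexivity.
Qed.

Lemma iter_inj {W : Type} (lt : W -> W -> Prop) (H : is_omega1 W lt) (s : W -> W) (Hs : succ_spec lt s) l1 l2 k1 : forall k2, limzero lt l1 -> limzero lt l2 ->
  iter_s s l1 k1 = iter_s s l2 k2 -> l1 = l2 /\ k1 = k2.
Proof.
  induction k1 as [|k1 IH]; intros [|k2] L1 L2 E; simpl in E.
  - auto.
  - exfalso. apply (succ_not_limzero lt H s Hs (iter_s s l2 k2)). rewrite <- E. exact L1.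
  - exfalso. apply (succ_not_limzero lt H s Hs (iter_s s l1 k1)). rewrite E. exact L2.
  - apply (succ_inj lt H s Hs) in E. destruct (IH k2 L1 L2 E) as [-> ->]. auto.
Qed.

Lemma limits_unbounded {W : Type} (lt : W -> W -> Prop) (H : is_omega1 W lt) (s : W -> W) (Hs : succ_spec lt s) : forall b, exists c, lt b c /\ is_limit W lt c.
Proof.
  pose proof H as (Hirr & Htr & Htot & Hwf & Hcnt & Hunc).
  intros b. apply NNPP; intros Hn. apply Hunc.
  destruct (le_enum lt H b) as [h Hh].
  right. exists (fun m => let (i,k) := Cantor.of_nat m in iter_s s (h i) k).
  intros y _. destruct (decomp lt H s Hs y) as [[l0 k] [Hl Hy]]. simpl in Hl, Hy.
  assert (l0 = b \/ lt l0 b) as Hlb.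
  { destruct (Htot l0 b) as [e|[e|e]]; auto. exfalso. destruct Hl as [Hl|Hl].
    - apply Hn. eauto.
    - exact (Hl b e). }
  destruct (Hh l0 Hlb) as [i Hi]. exists (Cantor.to_nat (i,k)).
  rewrite Cantor.cancel_of_to. rewrite Hi. congruence.
Qed.


Fixpoint lad {W : Type} (f : nat -> W) (st : W -> W -> W) (n : nat) : W :=
  match n with 0 => f 0 | S n => st (lad f st n) (f (S n)) end.

Lemma ladder_exists {W : Type} (lt : W -> W -> Prop) : is_omega1 W lt -> forall a,
  exists la : nat -> W, is_limit W lt a ->
    (forall n, lt (la n) a) /\ (forall n m, n < m -> lt (la n) (la m)) /\
    (forall b, lt b a -> exists n, lt b (la n)).
Proof.
  intros H a. pose proof H as (Hirr & Htr & Htot & Hwf & Hcnt & Hunc).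
  destruct (classic (is_limit W lt a)) as [La|NL].
  2: { exists (fun _ => a). intros; contradiction. }
  destruct (Hcnt a) as [Hemp | [f0 Hf0]].
  { exfalso. destruct La as [[b Hb] _]. exact (Hemp b Hb). }
  destruct La as [[b0 Hb0] L].
  destruct (choice_fun (fun n y => lt y a /\ (lt (f0 n) a -> y = f0 n))) as [f Hf].
  { intros n. destruct (classic (lt (f0 n) a)) as [h|h].
    - exists (f0 n). auto.
    - exists b0. split; auto. intros; contradiction. }
  assert (Hst : exists st : W -> W -> W, forall x y, lt x a -> lt y a ->
            lt x (st x y) /\ lt y (st x y) /\ lt (st x y) a).
  { apply (choice_fun (fun x g => forall y, lt x a -> lt y a ->
            lt x (g y) /\ lt y (g y) /\ lt (g y) a)). intros x.
    apply (choice_fun (fun y z => lt x a -> lt y a -> lt x z /\ lt y z /\ lt z a)).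
    intros y. destruct (classic (lt x a /\ lt y a)) as [[hx hy]|hn].
    - destruct (Htot x y) as [e|[e|e]].
      + destruct (L y hy) as [c [c1 c2]]. exists c. eauto.
      + subst. destruct (L y hy) as [c [c1 c2]]. exists c. eauto.
      + destruct (L x hx) as [c [c1 c2]]. exists c. eauto.
    - exists x. intros; tauto. }
  destruct Hst as [st Hst].
  exists (lad f st). intros _.
  assert (H1 : forall n, lt (lad f st n) a).
  { induction n as [|n IH]; simpl. apply Hf. apply Hst; auto. apply Hf. }
  assert (Hstep : forall n, lt (lad f st n) (lad f st (S n))).
  { intros n. simpl. apply Hst; auto. apply Hf. }
  split; [exact H1|split].
  - intros n m Hnm. induction m as [|m IH]; [lia|].
    assert (n = m \/ n < m) as [->|h] by lia; auto. eauto.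
  - intros b Hb. destruct (Hf0 b Hb) as [n Hn].
    assert (Efn : f n = b) by (rewrite <- Hn; apply Hf; rewrite Hn; exact Hb).
    destruct n as [|n].
    + exists 1. rewrite <- Efn. exact (Hstep 0).
    + exists (S n). simpl. rewrite <- Efn. apply Hst; auto. apply Hf.
Qed.
Theorem lemma4 (W : Type) (lt : W -> W -> Prop) (N : Type)
    (tlt : N -> N -> Prop) (ht : N -> W) :
  is_omega1 W lt ->
  aronszajn_tree W lt N tlt ht ->
  diamond W lt ->
  exists (l : W -> nat -> W) (c : W -> nat -> nat),
    ladder_system W lt l /\ ~ sigma_T_uniformizable W lt N tlt ht l c.
Proof.
  intros Hom Har Hdia.
  pose proof Hom as (Hirr & Htr & Htot & Hwf & Hcnt & Hunc).
  destruct Har as [Htree [Hlev _]].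
  destruct Htree as (Tirr & Ttr & Tht & Tpred & Tuniq & Tsurj).
  destruct Hdia as [D [HD1 HD2]].
  destruct (succ_exists lt Hom) as [s Hs].
  destruct (choice_fun _ (decomp lt Hom s Hs)) as [dec Hdec].
  set (code := fun b j => iter_s s (fst (dec b)) (Cantor.to_nat (snd (dec b), j))).
  assert (code_inj : forall b b' j j', code b j = code b' j' -> b = b' /\ j = j').
  { intros b b' j j' E. unfold code in E.
    destruct (Hdec b) as [L1 E1]. destruct (Hdec b') as [L2 E2].
    destruct (iter_inj lt Hom s Hs _ _ _ _ L1 L2 E) as [Ea Eb].
    apply (f_equal Cantor.of_nat) in Eb. rewrite !Cantor.cancel_of_to in Eb.
    injection Eb as Eo Ej.
    split; [|exact Ej]. rewrite E1, E2, Ea, Eo. reflexivity. }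
  assert (code_lt : forall a b j, is_limit W lt a -> lt b a -> lt (code b j) a).
  { intros a b j La Hb. unfold code. apply (iter_lt_limit lt Hom s Hs); auto.
    destruct (Hdec b) as [_ E1].
    destruct (iter_ge lt Hom s Hs (fst (dec b)) (snd (dec b))) as [e|e];
      rewrite <- E1 in e.
    - rewrite <- e; exact Hb.
    - eauto. }
  assert (Hen : forall a, exists e : nat -> N, forall t, ht t = a -> exists i, e i = t).
  { intros a. destruct (Hlev a) as [Hemp | [e He]].
    - destruct (Tsurj a) as [t Ht]. exfalso; exact (Hemp t Ht).
    - exists e. exact He. }
  destruct (choice_fun _ Hen) as [en Hen'].
  assert (Hidx : forall t, exists i, en (ht t) i = t) by (intros t; apply Hen'; reflexivity).
  destruct (choice_fun _ Hidx) as [idx Hidx'].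
  set (xi := fun n t v => code (ht t) (Cantor.to_nat (idx t, Cantor.to_nat (n, v)))).
  assert (xi_inj : forall n t v n' t' v', xi n t v = xi n' t' v' -> n = n' /\ t = t' /\ v = v').
  { intros n t v n' t' v' E. apply code_inj in E as [E1 E2].
    apply (f_equal Cantor.of_nat) in E2; rewrite !Cantor.cancel_of_to in E2.
    assert (E3 : idx t = idx t') by exact (f_equal fst E2).
    assert (E4 : Cantor.to_nat (n, v) = Cantor.to_nat (n', v')) by exact (f_equal snd E2).
    apply (f_equal Cantor.of_nat) in E4; rewrite !Cantor.cancel_of_to in E4.
    injection E4 as E5 E6.
    split; [exact E5|split; [|exact E6]].
    rewrite <- (Hidx' t), <- (Hidx' t'), E1, E3. reflexivity. }
  assert (Hr : forall t, exists g : W -> N, forall c, lt c (ht t) -> tlt (g c) t /\ ht (g c) = c).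
  { intros t. apply (choice_fun (fun c y => lt c (ht t) -> tlt y t /\ ht y = c)).
    intros c. destruct (classic (lt c (ht t))) as [h|h].
    - destruct (Tpred t c h) as [s0 [H1 H2]]. exists s0. auto.
    - exists t. intros h'; contradiction. }
  destruct (choice_fun _ Hr) as [r Hr'].
  destruct (choice_fun _ (ladder_exists lt Hom)) as [l Hl].
  assert (Hcv : forall a, exists g : nat -> nat, forall k i n j,
     k = Cantor.to_nat (Cantor.to_nat (i, n), j) ->
     (exists v, D a (xi n (r (en a i) (l a k)) v)) -> D a (xi n (r (en a i) (l a k)) (g k))).
  { intros a. apply (choice_fun (fun k v0 => forall i n j,
     k = Cantor.to_nat (Cantor.to_nat (i, n), j) ->
     (exists v, D a (xi n (r (en a i) (l a k)) v)) -> D a (xi n (r (en a i) (l a k)) v0))).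
    intros k. destruct (Cantor.of_nat k) as [q j0] eqn:Ek.
    destruct (Cantor.of_nat q) as [i0 n0] eqn:Eq.
    destruct (classic (exists v, D a (xi n0 (r (en a i0) (l a k)) v))) as [[v Hv]|Hnv].
    - exists v. intros i n j Hk _.
      assert (Ek' := Ek). rewrite Hk, Cantor.cancel_of_to in Ek'.
      assert (Ek1 : Cantor.to_nat (i, n) = q) by exact (f_equal fst Ek').
      rewrite <- Ek1, Cantor.cancel_of_to in Eq. injection Eq as -> ->. exact Hv.
    - exists 0. intros i n j Hk Hex. exfalso. apply Hnv.
      assert (Ek' := Ek). rewrite Hk, Cantor.cancel_of_to in Ek'.
      assert (Ek1 : Cantor.to_nat (i, n) = q) by exact (f_equal fst Ek').
      rewrite <- Ek1, Cantor.cancel_of_to in Eq. injection Eq as -> ->. exact Hex. }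
  destruct (choice_fun _ Hcv) as [cv Hcv'].
  exists l, (fun a k => S (cv a k)). split.
  - intros a La. exact (Hl a La).
  - intros (UA & f & Hcov & Hlim & Hfun).
    set (G := fun n s0 v => exists t k, UA n t /\ f t <= k /\
               restr W N tlt ht t (l (ht t) k) s0 /\ S (cv (ht t) k) = v).
    set (X := fun b => exists n s0 v, b = xi n s0 v /\ G n s0 v).
    destruct (HD2 X (is_limit W lt)) as [al [Lal Hal]].
    { split.
      - intros b. apply (limits_unbounded lt Hom s Hs).
      - intros a La _. exact La. }
    destruct (Tsurj al) as [t Ht].
    destruct (Hcov t) as [n Hn]. { rewrite Ht. exact Lal. }
    destruct (Hen' al t Ht) as [i Hi].
    set (m := f t). set (k := Cantor.to_nat (Cantor.to_nat (i, n), m)).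
    assert (Hkm : m <= k).
    { pose proof (Cantor.to_nat_non_decreasing (Cantor.to_nat (i, n)) m). unfold k. lia. }
    destruct (Hl al Lal) as [Hl1 [Hl2 Hl3]].
    set (s0 := r t (l al k)).
    assert (Hs0 : tlt s0 t /\ ht s0 = l al k) by (apply Hr'; rewrite Ht; apply Hl1).
    assert (Hrt : restr W N tlt ht t (l (ht t) k) s0).
    { unfold restr. right. rewrite Ht. exact Hs0. }
    assert (HG : G n s0 (S (cv al k))).
    { exists t, k. rewrite Ht in Hrt |- *. repeat split; auto. }
    assert (HX : X (xi n s0 (S (cv al k)))) by (exists n, s0, (S (cv al k)); split; auto).
    assert (Hxlt : forall v, lt (xi n s0 v) al).
    { intros v. unfold xi. apply code_lt; auto. rewrite (proj2 Hs0). apply Hl1. }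
    apply Hal in HX; [|apply Hxlt].
    pose proof (Hcv' al k i n m eq_refl) as HD. rewrite Hi in HD. fold s0 in HD.
    specialize (HD (ex_intro _ _ HX)).
    apply Hal in HD; [|apply Hxlt].
    destruct HD as (n' & s' & v' & E & Hg).
    apply xi_inj in E as (<- & <- & <-).
    destruct Hg as (t' & k' & Hn' & Hf' & Hr0 & Hc').
    pose proof (Hfun n t t' k k' s0 Hn Hn' Hkm Hf' Hrt Hr0) as Hc.
    simpl in Hc. rewrite Hc', Ht in Hc. lia.
Qed.
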